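(* Let $F\subsetneq K$ be fields of characteristic $0$, with $F$ a proper nonempty subfield of $K$. Let $p(x)=\sum_{k=0}^{n}a_k x^k\in K[x]$ with $a_n\neq 0$, and let $q(x)=\sum_{j=0}^{m}b_j x^j\in F[x]$ with $b_m\neq 0$. Then $D_F(p\circ q)=D_F(p)\,D_F(q)$.
   Context: For sets $F\subset K$ and $p(x)=\sum_{k=0}^{n}a_kx^k\in K[x]$ with $a_n\neq 0$, the $F$ deficit $D_F(p)$ is defined as follows: if $p\in K[x]\setminus F[x]$, then $D_F(p)=n-\max\{0\le k\le n: a_k\notin F\}$; if $p\in F[x]$, then $D_F(p)=n$. Here $F[x]$ denotes the set of polynomials with all coefficients in $F$. *)

(* Defs.v *)
From mathcomp Require Import all_boot all_order all_algebra.
Set Implicit Arguments. Unset Strict Implicit. Unset Printing Implicit Defensive.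
Import GRing.Theory.
Local Open Scope ring_scope.

(* F-deficit D_F(p) of a polynomial p in K[x], for F a subset of K.
   n = deg p = (size p).-1.  If p is in F[x], D_F(p) = n; otherwise
   D_F(p) = n - max { k <= n | p_k \notin F }.
   (For p = 0, which is outside the paper's domain, this gives 0.) *)
Definition deficit (K : nzRingType) (F : {pred K}) (p : {poly K}) : nat :=
  if p \is a polyOver F then (size p).-1
  else subn (size p).-1 (\max_(k < size p | p`_k \notin F) (k : nat)).

(* Main.v *)
Require Import Defs.
From mathcomp Require Import all_boot all_order all_algebra.
Set Implicit Arguments. Unset Strict Implicit. Unset Printing Implicit Defensive.
Import GRing.Theory.
Local Open Scope ring_scope.

Section Aux.
Variables (K : fieldType) (F : divringClosed K).

Lemma notF_size (r : {poly K}) k : r`_k \notin F -> (k < size r)%N.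
Proof.
move=> h; rewrite ltnNge; apply/negP => /(nth_default 0) e.
by move: h; rewrite [r`_k]e rpred0.
Qed.

Lemma deficit_char (r : {poly K}) k : r`_k \notin F ->
  (forall i, (k < i)%N -> r`_i \in F) -> deficit F r = ((size r).-1 - k)%N.
Proof.
move=> hk hi; have ks := notF_size hk.
rewrite /deficit; have -> : (r \is a polyOver F) = false.
  by apply/negP => /polyOverP h; move: hk; rewrite h.
congr (_ - _)%N; apply/eqP; rewrite eqn_leq; apply/andP; split.
  apply/bigmax_leqP => i hiF; rewrite leqNgt; apply/negP => /hi.
  by move: hiF => /negP.
exact: (@leq_bigmax_cond _ _ (fun i : 'I_(size r) => i : nat) (Ordinal ks)).
Qed.

Lemma get_k (r : {poly K}) : r \isn't a polyOver F ->
  exists k, r`_k \notin F /\ forall i, (k < i)%N -> r`_i \in F.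
Proof.
move=> h.
have ex : exists i, (i < size r)%N && (r`_i \notin F).
  case: (boolP [exists i : 'I_(size r), r`_i \notin F]).
    by case/existsP => i hi; exists i; rewrite ltn_ord.
  move=> /existsPn hn; move: h; case/negP; apply/polyOverP => i.
  case: (ltnP i (size r)) => hi.
    by move: (hn (Ordinal hi)); rewrite negbK.
  by rewrite nth_default // rpred0.
have bd : forall i, (i < size r)%N && (r`_i \notin F) -> (i <= size r)%N.
  by move=> i /andP [/ltnW].
case: (ex_maxnP ex bd) => k /andP [_ hk] hmax.
exists k; split => // i ki; apply/negPn/negP => hi.
have := hmax i; rewrite (notF_size hi) hi => /(_ isT).
by rewrite leqNgt ki.
Qed.

Lemma deficit_const (r : {poly K}) : (size r <= 1)%N -> deficit F r = 0%N.
Proof.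
move=> h; rewrite /deficit; case: ifP => _.
  by case: (size r) h => [|[]].
by case: (size r) h => [|[]].
Qed.

End Aux.

Theorem theorem5 (K : fieldType) (F : divringClosed K)
    (charK0 : [pchar K] =i pred0)
    (Fproper : exists x : K, x \notin F)
    (p q : {poly K}) (p_nz : p != 0) (q_nz : q != 0)
    (qF : q \is a polyOver F) :
  deficit F (p \Po q) = (deficit F p * deficit F q)%N.
Proof.
have dq : deficit F q = (size q).-1 by rewrite /deficit qF.
case: (leqP (size q) 1) => sq.
  have e0 : (size q).-1 = 0%N by case: (size q) sq => [|[]].
  rewrite dq e0 muln0; apply: deficit_const.
  by rewrite [q]size1_polyC // comp_polyCr size_polyC leq_b1.
case: (boolP (p \is a polyOver F)) => pF.
  have pqF : p \Po q \is a polyOver F by apply: polyOver_comp.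
  by rewrite /deficit pF qF pqF size_comp_poly.
have [k [hk hmax]] := get_k pF.
set plo := take_poly k.+1 p.
set phi := p - plo.
have phiF : phi \is a polyOver F.
  apply/polyOverP => i; rewrite coefB coef_take_poly.
  case: ifP => hi; first by rewrite subrr rpred0.
  by rewrite subr0 hmax // ltnNge -ltnS hi.
have phiqF : phi \Po q \is a polyOver F by apply: polyOver_comp.
have splo : size plo = k.+1.
  apply/eqP; rewrite eqn_leq size_take_poly /=.
  apply: (notF_size (F := F)); rewrite coef_take_poly ltnSn //.
have ep : p = plo + phi by rewrite /phi addrC subrK.
have eq : forall i, (p \Po q)`_i = (plo \Po q)`_i + (phi \Po q)`_i.
  by move=> i; rewrite {1}ep comp_polyD coefD.
have cF : lead_coef q \in F by move/polyOverP: qF => ->.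
have cnz : lead_coef q != 0 by rewrite lead_coef_eq0.
rewrite (deficit_char (k := (k * (size q).-1)%N)).
- rewrite size_comp_poly dq (deficit_char hk hmax) mulnBl //.
- rewrite eq; apply/negP => h.
  have : (plo \Po q)`_(k * (size q).-1) \in F.
    by rewrite -(addrK ((phi \Po q)`_(k * (size q).-1)) (_`_ _)) rpredB //;
      move/polyOverP: phiqF.
  have -> : (plo \Po q)`_(k * (size q).-1) = lead_coef (plo \Po q).
    by rewrite lead_coefE size_comp_poly splo.
  rewrite lead_coef_comp // splo /= lead_coefE splo /= coef_take_poly ltnSn.
  move=> h2; move: hk; case/negP.
  have -> : p`_k = p`_k * lead_coef q ^+ k / lead_coef q ^+ k.
    by rewrite mulfK // expf_neq0.
  by rewrite rpred_div // rpredX.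
- move=> i hi; rewrite eq nth_default ?add0r; last first.
    apply: leq_trans (size_comp_poly_leq _ _) _; rewrite splo /=; exact: hi.
  by move/polyOverP: phiqF.
Qed.
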